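(* Let $d_1,d_2,e_1,e_2\ge2$ be integers, $d=d_1+d_2$, and let $A$ be the $d\times d_1e_1d_2e_2$ matrix whose columns are the vectors $i\,\mathbf{e}_\kappa\oplus j\,\mathbf{e}_\lambda\in\mathbb{N}^{d_1}\oplus\mathbb{N}^{d_2}$ for $(\kappa,i,\lambda,j)\in[d_1]\times[e_1]\times[d_2]\times[e_2]$. Then the $d$-dimensional polytope $\mathrm{conv}(A\cup0)$ has $d+4$ facets, given by the $d+2$ inequalities $$y_k\ge0\ (k\in[d]),\quad y_1+\dots+y_{d_1}\le e_1(y_{d_1+1}+\dots+y_{d_1+d_2}),\quad y_{d_1+1}+\dots+y_{d_1+d_2}\le e_2(y_1+\dots+y_{d_1}),$$ together with $y_1+\dots+y_{d_1}\le e_1$ and $y_{d_1+1}+\dots+y_{d_1+d_2}\le e_2$.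
   Context: $[m]=\{1,\dots,m\}$; $\mathbf{e}_\kappa,\mathbf{e}_\lambda$ are standard unit vectors; $\mathrm{conv}(A\cup 0)\subset\mathbb{R}^d$ is the convex hull of the columns of $A$ together with the origin. *)

(* Defs.v *)
From HB Require Import structures.
From mathcomp Require Import all_boot all_order all_algebra.
Set Implicit Arguments. Unset Strict Implicit. Unset Printing Implicit Defensive.
Import Order.TTheory GRing.Theory Num.Theory.
Local Open Scope ring_scope.

Section Defs.
Variable R : realFieldType.

Definition dotv n (a y : 'rV[R]_n) : R := \sum_(k < n) a 0 k * y 0 k.

Definition conv_hull (I : finType) n (f : I -> 'rV[R]_n) : 'rV[R]_n -> Prop :=
  fun y => exists w : I -> R, (forall i, 0 <= w i) /\ \sum_i w i = 1 /\
                        y = \sum_i w i *: f i.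

Definition affdim_ge n (S : 'rV[R]_n -> Prop) (k : nat) : Prop :=
  exists x : 'I_k.+1 -> 'rV[R]_n, (forall i, S (x i)) /\
    row_free (\matrix_(i < k) (x (lift ord0 i) - x ord0)).

Definition has_affdim n (S : 'rV[R]_n -> Prop) (k : nat) : Prop :=
  affdim_ge S k /\ ~ affdim_ge S k.+1.

Definition is_face n (P F : 'rV[R]_n -> Prop) : Prop :=
  exists (a : 'rV[R]_n) (b : R), (forall y, P y -> dotv a y <= b) /\
    (forall y, F y <-> (P y /\ dotv a y = b)).

Definition is_facet n (P F : 'rV[R]_n -> Prop) (dim : nat) : Prop :=
  is_face P F /\ has_affdim F dim.-1.

(* The column i e_kappa (+) j e_lambda of A, for kappa in [d1], i in [e1],
   lambda in [d2], j in [e2] (ordinals are 0-based, so i = val i' + 1). *)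
Definition Acol d1 e1 d2 e2 (c : 'I_d1 * 'I_e1 * 'I_d2 * 'I_e2) : 'rV[R]_(d1 + d2) :=
  let: (kap, i, lam, j) := c in
  \row_k (if k == lshift d2 kap then (val i).+1%:R
          else if k == rshift d1 lam then (val j).+1%:R else 0).

Definition Apts d1 e1 d2 e2 (c : option ('I_d1 * 'I_e1 * 'I_d2 * 'I_e2)) : 'rV[R]_(d1 + d2) :=
  if c is Some c' then Acol c' else 0.

Definition convA0 d1 e1 d2 e2 : 'rV[R]_(d1 + d2) -> Prop := conv_hull (@Apts d1 e1 d2 e2).

Definition ind1 d1 d2 : 'rV[R]_(d1 + d2) := \row_k (if (k < d1)%N then 1 else 0).
Definition ind2 d1 d2 : 'rV[R]_(d1 + d2) := \row_k (if (k < d1)%N then 0 else 1).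

(* The d+4 inequalities a.y <= b, indexed by 'I_(d1+d2) + 'I_4:
   inl k : -y_k <= 0
   inr 0 : (y_1+..+y_d1) - e1 (y_{d1+1}+..+y_d) <= 0
   inr 1 : (y_{d1+1}+..+y_d) - e2 (y_1+..+y_d1) <= 0
   inr 2 : y_1+..+y_d1 <= e1
   inr 3 : y_{d1+1}+..+y_d <= e2 *)
Definition ineq_normal d1 e1 d2 e2 (t : 'I_(d1 + d2) + 'I_4) : 'rV[R]_(d1 + d2) :=
  match t with
  | inl k => - (\row_l (if l == k then 1 else 0))
  | inr m => match val m with
             | 0 => ind1 d1 d2 - e1%:R *: ind2 d1 d2
             | 1 => ind2 d1 d2 - e2%:R *: ind1 d1 d2
             | 2 => ind1 d1 d2
             | _ => ind2 d1 d2
             end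
  end.

Definition ineq_rhs d1 d2 (e1 e2 : nat) (t : 'I_(d1 + d2) + 'I_4) : R :=
  match t with
  | inl _ => 0
  | inr m => match val m with
             | 0 => 0
             | 1 => 0
             | 2 => e1%:R
             | _ => e2%:R
             end
  end.

End Defs.

(* Main.v *)
Require Import Defs.
From HB Require Import structures.
From mathcomp Require Import all_boot all_order all_algebra.
From mathcomp Require Import zify ring lra.
Set Implicit Arguments. Unset Strict Implicit. Unset Printing Implicit Defensive.
Import Order.TTheory GRing.Theory Num.Theory.
Local Open Scope ring_scope.

Section LinAlg.
Variable R : realFieldType.

Lemma dotvE n (a y : 'rV[R]_n) : dotv a y = (a *m y^T) 0 0.
Proof. by rewrite mxE /dotv; apply: eq_bigr => k _; rewrite mxE. Qed.

Lemma dotvDr n (a y z : 'rV[R]_n) : dotv a (y + z) = dotv a y + dotv a z.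
Proof. by rewrite /dotv -big_split; apply: eq_bigr => k _; rewrite mxE mulrDr. Qed.

Lemma dotvNr n (a y : 'rV[R]_n) : dotv a (- y) = - dotv a y.
Proof. by rewrite /dotv -sumrN; apply: eq_bigr => k _; rewrite mxE mulrN. Qed.

Lemma dotvBr n (a y z : 'rV[R]_n) : dotv a (y - z) = dotv a y - dotv a z.
Proof. by rewrite dotvDr dotvNr. Qed.

Lemma dotvZr n (a y : 'rV[R]_n) c : dotv a (c *: y) = c * dotv a y.
Proof. by rewrite /dotv mulr_sumr; apply: eq_bigr => k _; rewrite mxE mulrCA. Qed.

Lemma dotvZl n (a y : 'rV[R]_n) c : dotv (c *: a) y = c * dotv a y.
Proof. by rewrite /dotv mulr_sumr; apply: eq_bigr => k _; rewrite mxE mulrA. Qed.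

Lemma dotv0r n (a : 'rV[R]_n) : dotv a 0 = 0.
Proof. by rewrite /dotv big1 // => k _; rewrite mxE mulr0. Qed.

Lemma dotv_sumr n (I : finType) (a : 'rV[R]_n) (F : I -> 'rV[R]_n) :
  dotv a (\sum_i F i) = \sum_i dotv a (F i).
Proof.
rewrite /dotv exchange_big /=; apply: eq_bigr => k _.
by rewrite summxE mulr_sumr.
Qed.

Lemma ker_rowP m n (Y : 'M[R]_(m, n)) (v : 'rV[R]_n) :
  (v <= kermx Y^T)%MS <-> (forall i, dotv v (row i Y) = 0).
Proof.
split.
  move/sub_kermxP => H i; move/rowP: H => /(_ i).
  rewrite !mxE => H0; rewrite dotvE mxE; apply: etrans H0.
  by apply: eq_bigr => k _; rewrite !mxE.
move=> H; apply/sub_kermxP/rowP => i; rewrite !mxE; apply: etrans (H i); rewrite dotvE mxE.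
by apply: eq_bigr => k _; rewrite !mxE.
Qed.

Lemma rowsub_inj_free m m' n (g : 'I_m' -> 'I_m) (M : 'M[R]_(m, n)) :
  injective g -> row_free M -> row_free (rowsub g M).
Proof.
move=> ginj fM; apply: inj_row_free => v.
rewrite rowsubE mulmxA -(mul0mx _ M) => /(row_free_inj fM) H.
apply/rowP => i; move/rowP: H => /(_ (g i)).
rewrite !mxE (bigD1 i) //= !mxE eqxx mulr1 big1 ?addr0 // => j ji.
by rewrite !mxE (inj_eq ginj) (negbTE ji) mulr0.
Qed.

Lemma aff_lb n (S : 'rV[R]_n -> Prop) (I : finType) (x0 : 'rV[R]_n)
  (y : I -> 'rV[R]_n) m (U : 'M[R]_(m, n)) :
  S x0 -> (forall i, S (y i)) ->
  (forall v : 'rV[R]_n, (forall i, dotv v (y i - x0) = 0) -> (v <= U)%MS) ->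
  affdim_ge S (n - \rank U).
Proof.
move=> Sx0 Sy HU.
pose Y := \matrix_(i < #|I|) (y (enum_val i) - x0).
have rk : (n - \rank U <= \rank Y)%N.
  have sK : (kermx Y^T <= U)%MS.
    apply/row_subP => i; apply: HU => j.
    have /ker_rowP := row_sub i (kermx Y^T).
    move=> /(_ (enum_rank j)); rewrite rowK enum_rankK //.
  have := mxrankS sK; rewrite mxrank_ker mxrank_tr; lia.
pose f := maxrankfun Y.
have fr := maxrowsub_free Y.
pose g : 'I_(n - \rank U) -> 'I_#|I| := fun i => f (widen_ord rk i).
have ginj : injective g.
  by move=> i j /maxrankfun_inj /(congr1 val) /= /val_inj.
pose x := fun i : 'I_(n - \rank U).+1 =>
  if unlift ord0 i is Some j then y (enum_val (g j)) else x0.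
exists x; split.
  by move=> i; rewrite /x; case: unlift.
have -> : (\matrix_(i < n - \rank U) (x (lift ord0 i) - x ord0)) = rowsub g Y.
  apply/matrixP => i j.
  by rewrite !mxE /x liftK unlift_none.
have -> : rowsub g Y = rowsub (widen_ord rk) (rowsub f Y).
  by apply/matrixP => i j; rewrite !mxE.
apply: rowsub_inj_free => //.
by move=> i j /(congr1 val) /= /val_inj.
Qed.

Definition dmx n k (x : 'I_k.+1 -> 'rV[R]_n) :=
  \matrix_(i < k) (x (lift ord0 i) - x ord0).

Lemma dmx_ker n k (x : 'I_k.+1 -> 'rV[R]_n) (N : 'rV[R]_n) r :
  (forall i, dotv N (x i) = r) -> (N <= kermx (dmx x)^T)%MS.
Proof.
move=> H; apply/ker_rowP => i; rewrite rowK dotvBr !H subrr //.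
Qed.

Lemma aff_ub n (S : 'rV[R]_n -> Prop) k (N : 'rV[R]_n) r :
  affdim_ge S k -> N != 0 -> (forall y, S y -> dotv N y = r) -> (k < n)%N.
Proof.
move=> [x [Sx fX]] N0 HN.
have sK : (N <= kermx (dmx x)^T)%MS by apply: (dmx_ker (r := r)) => i; apply: HN.
have := mxrankS sK; rewrite mxrank_ker mxrank_tr rank_rV N0 (eqP fX) /=; lia.
Qed.

Lemma aff_ub0 n (S : 'rV[R]_n -> Prop) : ~ affdim_ge S n.+1.
Proof.
move=> [x [_ fX]]; have := rank_leq_col (dmx x); rewrite (eqP fX); lia.
Qed.

Lemma line_ker n (X : 'M[R]_(n.-1, n)) (a N : 'rV[R]_n) :
  (0 < n)%N -> row_free X -> a != 0 -> (a <= kermx X^T)%MS ->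
  (N <= kermx X^T)%MS -> exists c, N = c *: a.
Proof.
move=> n0 fX a0 sa sN.
have rK : \rank (kermx X^T) = 1%N by rewrite mxrank_ker mxrank_tr (eqP fX); lia.
have := mxrank_leqif_eq sa; rewrite rank_rV a0 rK /= => -[_ E].
have eqa : (a == kermx X^T)%MS by rewrite -E.
apply/sub_rVP; apply: submx_trans sN _.
by move/eqmxP: eqa => ->.
Qed.

End LinAlg.

Section Poly.
Variable R : realFieldType.
Variables d1 d2 e1 e2 : nat.
Hypotheses (hd1 : (2 <= d1)%N) (hd2 : (2 <= d2)%N) (he1 : (2 <= e1)%N) (he2 : (2 <= e2)%N).

Local Notation n := (d1 + d2)%N.
Local Notation Idx := (option ('I_d1 * 'I_e1 * 'I_d2 * 'I_e2)).
Local Notation pt := (@Apts R d1 e1 d2 e2).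
Local Notation P := (@convA0 R d1 e1 d2 e2).
Local Notation N := (@ineq_normal R d1 e1 d2 e2).
Local Notation r := (@ineq_rhs R d1 d2 e1 e2).
Local Notation L := (lshift d2).
Local Notation Rr := (@rshift d1 d2).

Lemma lshift_lt (k : 'I_d1) : (L k < d1)%N. Proof. by rewrite /= ltn_ord. Qed.
Lemma rshift_lt (k : 'I_d2) : (Rr k < d1)%N = false.
Proof. by rewrite /= ltnNge leq_addr. Qed.

Lemma Acol_l (c : 'I_d1 * 'I_e1 * 'I_d2 * 'I_e2) k :
  (@Acol R d1 e1 d2 e2 c) 0 (L k) = if k == c.1.1.1 then (c.1.1.2).+1%:R else 0.
Proof.
case: c => [[[ka i] la] j] /=; rewrite mxE eq_shift eq_lrshift.
by case: eqP.
Qed.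

Lemma Acol_r (c : 'I_d1 * 'I_e1 * 'I_d2 * 'I_e2) k :
  (@Acol R d1 e1 d2 e2 c) 0 (Rr k) = if k == c.1.2 then (c.2).+1%:R else 0.
Proof.
case: c => [[[ka i] la] j] /=; rewrite mxE eq_rlshift eq_shift //.
Qed.

Lemma dotv_Acol (v : 'rV[R]_n) ka i la j :
  dotv v (@Acol R d1 e1 d2 e2 (ka, i, la, j)) =
  (i.+1)%:R * v 0 (L ka) + (j.+1)%:R * v 0 (Rr la).
Proof.
rewrite /dotv big_split_ord /=; congr (_ + _).
  rewrite (bigD1 ka) //= mxE eqxx big1 ?addr0; first by rewrite mulrC.
  by move=> k /negbTE kk; rewrite mxE eq_shift kk eq_lrshift mulr0.
rewrite (bigD1 la) //= mxE eq_rlshift eq_shift eqxx big1 ?addr0; first by rewrite mulrC.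
by move=> k /negbTE kk; rewrite mxE eq_rlshift eq_shift kk mulr0.
Qed.

Lemma pt_Some c : pt (Some c) = @Acol R d1 e1 d2 e2 c. Proof. by []. Qed.

Lemma dotv_pt_None v : dotv v (pt None) = 0.
Proof. exact: dotv0r. Qed.

Lemma P_dotv y : P y -> exists w : Idx -> R, (forall q, 0 <= w q) /\ \sum_q w q = 1 /\
   forall u, dotv u y = \sum_q w q * dotv u (pt q).
Proof.
move=> [w [w0 [w1 ->]]]; exists w; split => //; split => // u.
by rewrite dotv_sumr; apply: eq_bigr => q _; rewrite dotvZr.
Qed.

Lemma subr_ge0_intro (x y : R) : x <= y -> 0 <= y - x.
Proof. by rewrite subr_ge0. Qed.

Lemma supp (a u : 'rV[R]_n) b c y : (forall q, dotv a (pt q) <= b) -> P y ->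
  dotv a y = b -> (forall q, dotv a (pt q) = b -> dotv u (pt q) = c) ->
  dotv u y = c.
Proof.
move=> va /P_dotv [w [w0 [w1 Hd]]] ay Hu.
have H0 : \sum_q w q * (b - dotv a (pt q)) = 0.
  under eq_bigr do rewrite mulrBr.
  by rewrite sumrB -mulr_suml w1 mul1r -Hd ay subrr.
have Z := psumr_eq0P (fun q _ => mulr_ge0 (w0 q) (subr_ge0_intro (va q))) H0.
rewrite Hd; transitivity (\sum_q w q * c).
  apply: eq_bigr => q _.
  move/eqP: (Z q isT); rewrite mulf_eq0 subr_eq0 => /orP[/eqP -> | /eqP E].
    by rewrite !mul0r.
  by rewrite (Hu q (esym E)).
by rewrite -mulr_suml w1 mul1r.
Qed.

Definition o0 : 'I_4 := @Ordinal 4 0 isT.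
Definition o1 : 'I_4 := @Ordinal 4 1 isT.
Definition o2 : 'I_4 := @Ordinal 4 2 isT.
Definition o3 : 'I_4 := @Ordinal 4 3 isT.

Lemma Nl k k' : (N (inl k)) 0 k' = - (k' == k)%:R.
Proof. by rewrite /= !mxE; case: eqP. Qed.
Lemma N0_l k : (N (inr o0)) 0 (L k) = 1.
Proof. by rewrite /= !mxE /= ltn_ord mulr0 subr0. Qed.
Lemma N0_r k : (N (inr o0)) 0 (Rr k) = - e1%:R.
Proof. by rewrite /= !mxE /= ltnNge leq_addr /= mulr1 sub0r. Qed.
Lemma N1_l k : (N (inr o1)) 0 (L k) = - e2%:R.
Proof. by rewrite /= !mxE /= ltn_ord mulr1 sub0r. Qed.
Lemma N1_r k : (N (inr o1)) 0 (Rr k) = 1.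
Proof. by rewrite /= !mxE /= ltnNge leq_addr /= mulr0 subr0. Qed.
Lemma N2_l k : (N (inr o2)) 0 (L k) = 1.
Proof. by rewrite /= !mxE /= ltn_ord. Qed.
Lemma N2_r k : (N (inr o2)) 0 (Rr k) = 0.
Proof. by rewrite /= !mxE /= ltnNge leq_addr. Qed.
Lemma N3_l k : (N (inr o3)) 0 (L k) = 0.
Proof. by rewrite /= !mxE /= ltn_ord. Qed.
Lemma N3_r k : (N (inr o3)) 0 (Rr k) = 1.
Proof. by rewrite /= !mxE /= ltnNge leq_addr. Qed.

Lemma inr_cases (m : 'I_4) : [\/ m = o0, m = o1, m = o2 | m = o3].
Proof.
case: m => [[|[|[|[|m]]]] H].
- by constructor 1; apply/val_inj.
- by constructor 2; apply/val_inj.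
- by constructor 3; apply/val_inj.
- by constructor 4; apply/val_inj.
- by [].
Qed.

Lemma ineq_cases (t : 'I_n + 'I_4) :
  [\/ (exists k, t = inl (L k)), (exists k, t = inl (Rr k)),
     (t = inr o0 \/ t = inr o1) | (t = inr o2 \/ t = inr o3)].
Proof.
case: t => [k|m].
  case: (splitP k) => [j|j] E.
    by constructor 1; exists j; congr inl; apply/val_inj.
  by constructor 2; exists j; congr inl; apply/val_inj.
by case: (inr_cases m) => ->; [constructor 3; left|constructor 3; right|constructor 4; left|constructor 4; right].
Qed.

Lemma valid_pt t q : dotv (N t) (pt q) <= r t.
Proof.
case: q => [[[[ka i] la] j]|]; last first.
  by rewrite dotv_pt_None; case: (ineq_cases t) => [[k ->]|[k ->]|[->|->]|[->|->]] //=; rewrite ler0n.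
rewrite /= dotv_Acol.
case: (ineq_cases t) => [[k ->]|[k ->]|[->|->]|[->|->]].
- rewrite !Nl eq_rlshift /= oppr0 mulr0 addr0.
  by rewrite mulrN oppr_le0 mulr_ge0 ?ler0n.
- rewrite !Nl eq_lrshift /= oppr0 mulr0 add0r.
  by rewrite mulrN oppr_le0 mulr_ge0 ?ler0n.
- rewrite N0_l N0_r /= mulr1 mulrN subr_le0 -natrM ler_nat.
  have := ltn_ord i; nia.
- rewrite N1_l N1_r /= mulr1 mulrN addrC subr_le0 -natrM ler_nat.
  have := ltn_ord j; nia.
- rewrite N2_l N2_r /= mulr1 mulr0 addr0 ler_nat; exact: ltn_ord.
- rewrite N3_l N3_r /= mulr1 mulr0 add0r ler_nat; exact: ltn_ord.
Qed.

Lemma valid t y : P y -> dotv (N t) y <= r t.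
Proof.
move=> /P_dotv [w [w0 [w1 ->]]].
rewrite -[r t]mul1r -w1 mulr_suml; apply: ler_sum => q _.
by apply: ler_wpM2l => //; apply: valid_pt.
Qed.


Definition k0 : 'I_d1 := Ordinal (ltnW hd1).
Definition k1 : 'I_d1 := Ordinal hd1.
Definition l0 : 'I_d2 := Ordinal (ltnW hd2).
Definition l1 : 'I_d2 := Ordinal hd2.
Definition i0 : 'I_e1 := Ordinal (ltnW he1).
Definition i1 : 'I_e1 := Ordinal he1.
Definition j0 : 'I_e2 := Ordinal (ltnW he2).
Definition j1 : 'I_e2 := Ordinal he2.

Lemma P_pt q : P (pt q).
Proof.
exists (fun q' => (q' == q)%:R); split; first by move=> q'; rewrite ler0n.
split.
  by rewrite (bigD1 q) //= eqxx big1 ?addr0 // => q' /negbTE ->.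
rewrite (bigD1 q) //= eqxx scale1r big1 ?addr0 // => q' /negbTE ->.
by rewrite scale0r.
Qed.

Lemma rv_split (v w : 'rV[R]_n) : (forall k, v 0 (L k) = w 0 (L k)) ->
  (forall k, v 0 (Rr k) = w 0 (Rr k)) -> v = w.
Proof.
move=> Hl Hr; apply/rowP => k; case: (splitP k) => [j|j] E.
  by have -> : k = L j by apply/val_inj.
by have -> : k = Rr j by apply/val_inj.
Qed.

Lemma aff_P : has_affdim P n.
Proof.
split; last exact: aff_ub0.
have := @aff_lb R n P Idx 0 pt n 0 (P_pt None) P_pt.
rewrite mxrank0 subn0; apply => v Hv.
rewrite submx0; apply/eqP.
have H : forall (ka : 'I_d1) (i : 'I_e1) (la : 'I_d2) (j : 'I_e2), (i.+1)%:R * v 0 (L ka) + (j.+1)%:R * v 0 (Rr la) = 0.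
  by move=> ka i la j; have := Hv (Some (ka, i, la, j)); rewrite subr0 /= dotv_Acol.
apply: rv_split => k; rewrite mxE.
  have := H k i0 l0 j0; have := H k i1 l0 j0; rewrite /=; lra.
have := H k0 i0 k j0; have := H k0 i0 k j1; rewrite /=; lra.
Qed.


Lemma pe1 : (e1.-1 < e1)%N. Proof. by rewrite ltn_predL ltnW. Qed.
Lemma pe2 : (e2.-1 < e2)%N. Proof. by rewrite ltn_predL ltnW. Qed.
Definition it1 : 'I_e1 := Ordinal pe1.
Definition it2 : 'I_e2 := Ordinal pe2.
Lemma it1E : (it1 : nat).+1 = e1. Proof. by rewrite /= prednK // ltnW. Qed.
Lemma it2E : (it2 : nat).+1 = e2. Proof. by rewrite /= prednK // ltnW. Qed.

Lemma mulfK0 (x y : R) : x != 0 -> x * y = 0 -> y = 0.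
Proof. by move=> x0 /eqP; rewrite mulf_eq0 (negbTE x0) => /eqP. Qed.

Lemma e1_neq0 : e1%:R != 0 :> R. Proof. by rewrite pnatr_eq0; lia. Qed.
Lemma e2_neq0 : e2%:R != 0 :> R. Proof. by rewrite pnatr_eq0; lia. Qed.

Definition tq t q := dotv (N t) (pt q) = r t.

Definition kerprop t := exists q0, tq t q0 /\ forall v : 'rV[R]_n,
  (forall q, tq t q -> dotv v (pt q) = dotv v (pt q0)) -> exists c, v = c *: N t.

Lemma ker_inlL ks : kerprop (inl (L ks)).
Proof.
exists None; split; first by rewrite /tq dotv_pt_None.
move=> v Hv.
have H : forall (ka : 'I_d1) (i : 'I_e1) (la : 'I_d2) (j : 'I_e2), ka != ks ->
    (i.+1)%:R * v 0 (L ka) + (j.+1)%:R * v 0 (Rr la) = 0.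
  move=> ka i la j kk; have := Hv (Some (ka, i, la, j)).
  rewrite /tq /= !dotv_Acol dotv_pt_None; apply.
  by rewrite !Nl eq_shift (negbTE kk) eq_rlshift /= oppr0 !mulr0 addr0.
pose ko := if ks == k0 then k1 else k0.
have kok : ko != ks.
  rewrite /ko; case: ifP => /eqP E; first by rewrite E.
  by rewrite eq_sym; apply/eqP.
have Hr : forall la, v 0 (Rr la) = 0.
  by move=> la; have := H ko i0 la j0 kok; have := H ko i1 la j0 kok; rewrite /=; lra.
exists (- v 0 (L ks)); apply: rv_split => k; rewrite mxE Nl.
  rewrite eq_shift; case: eqP => [->|/eqP kk]; first by rewrite /=; lra.
  by have := H k i0 l0 j0 kk; rewrite Hr /=; lra.
by rewrite eq_rlshift Hr /=; lra.
Qed.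


Lemma ker_inlR ls : kerprop (inl (Rr ls)).
Proof.
exists None; split; first by rewrite /tq dotv_pt_None.
move=> v Hv.
have H : forall (ka : 'I_d1) (i : 'I_e1) (la : 'I_d2) (j : 'I_e2), la != ls ->
    (i.+1)%:R * v 0 (L ka) + (j.+1)%:R * v 0 (Rr la) = 0.
  move=> ka i la j kk; have := Hv (Some (ka, i, la, j)).
  rewrite /tq /= !dotv_Acol dotv_pt_None; apply.
  by rewrite !Nl eq_lrshift eq_shift (negbTE kk) /= oppr0 !mulr0 addr0.
pose lo := if ls == l0 then l1 else l0.
have lol : lo != ls.
  rewrite /lo; case: ifP => /eqP E; first by rewrite E.
  by rewrite eq_sym; apply/eqP.
have Hl : forall ka, v 0 (L ka) = 0.
  by move=> ka; have := H ka i0 lo j0 lol; have := H ka i0 lo j1 lol; rewrite /=; lra.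
exists (- v 0 (Rr ls)); apply: rv_split => k; rewrite mxE Nl.
  by rewrite eq_lrshift Hl /=; lra.
rewrite eq_shift; case: eqP => [->|/eqP kk]; first by rewrite /=; lra.
by have := H k0 i0 k j0 kk; rewrite Hl /=; lra.
Qed.

Lemma ker_inr0 : kerprop (inr o0).
Proof.
exists None; split; first by rewrite /tq dotv_pt_None.
move=> v Hv.
have H : forall ka la, e1%:R * v 0 (L ka) + v 0 (Rr la) = 0.
  move=> ka la; have := Hv (Some (ka, it1, la, j0)).
  rewrite /tq !pt_Some !dotv_Acol dotv_pt_None it1E /= !mul1r.
  by apply; rewrite N0_l N0_r; lra.
exists (v 0 (L k0)); apply: rv_split => k; rewrite mxE ?N0_l ?N0_r.
  rewrite mulr1; apply/eqP; rewrite -subr_eq0; apply/eqP; apply: (mulfK0 e1_neq0).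
  by have := H k l0; have := H k0 l0; lra.
by have := H k0 k; lra.
Qed.

Lemma ker_inr1 : kerprop (inr o1).
Proof.
exists None; split; first by rewrite /tq dotv_pt_None.
move=> v Hv.
have H : forall ka la, v 0 (L ka) + e2%:R * v 0 (Rr la) = 0.
  move=> ka la; have := Hv (Some (ka, i0, la, it2)).
  rewrite /tq !pt_Some !dotv_Acol dotv_pt_None it2E /= !mul1r.
  by apply; rewrite N1_l N1_r; lra.
exists (v 0 (Rr l0)); apply: rv_split => k; rewrite mxE ?N1_l ?N1_r.
  by have := H k l0; lra.
rewrite mulr1; apply/eqP; rewrite -subr_eq0; apply/eqP; apply: (mulfK0 e2_neq0).
by have := H k0 k; have := H k0 l0; lra.
Qed.

Lemma ker_inr2 : kerprop (inr o2).
Proof.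
have T : forall ka la j, tq (inr o2) (Some (ka, it1, la, j)).
  by move=> ka la j; rewrite /tq pt_Some dotv_Acol N2_l N2_r it1E mulr1 mulr0 addr0.
exists (Some (k0, it1, l0, j0)); split => //.
move=> v Hv.
have H : forall ka la (j : 'I_e2), e1%:R * v 0 (L ka) + (j.+1)%:R * v 0 (Rr la) =
   e1%:R * v 0 (L k0) + v 0 (Rr l0).
  move=> ka la j; have := Hv _ (T ka la j).
  by rewrite !pt_Some !dotv_Acol it1E /= mul1r.
have Hr : forall la, v 0 (Rr la) = 0.
  by move=> la; have := H k0 la j0; have := H k0 la j1; rewrite /=; lra.
exists (v 0 (L k0)); apply: rv_split => k; rewrite mxE ?N2_l ?N2_r.
  rewrite mulr1; apply/eqP; rewrite -subr_eq0; apply/eqP; apply: (mulfK0 e1_neq0).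
  by have := H k l0 j0; rewrite !Hr /=; lra.
by rewrite Hr mulr0.
Qed.

Lemma ker_inr3 : kerprop (inr o3).
Proof.
have T : forall ka i la, tq (inr o3) (Some (ka, i, la, it2)).
  by move=> ka i la; rewrite /tq pt_Some dotv_Acol N3_l N3_r it2E mulr1 mulr0 add0r.
exists (Some (k0, i0, l0, it2)); split => //.
move=> v Hv.
have H : forall ka la (i : 'I_e1), (i.+1)%:R * v 0 (L ka) + e2%:R * v 0 (Rr la) =
   v 0 (L k0) + e2%:R * v 0 (Rr l0).
  move=> ka la i; have := Hv _ (T ka i la).
  by rewrite !pt_Some !dotv_Acol it2E /= mul1r.
have Hl : forall ka, v 0 (L ka) = 0.
  by move=> ka; have := H ka l0 i0; have := H ka l0 i1; rewrite /=; lra.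
exists (v 0 (Rr l0)); apply: rv_split => k; rewrite mxE ?N3_l ?N3_r.
  by rewrite Hl mulr0.
rewrite mulr1; apply/eqP; rewrite -subr_eq0; apply/eqP; apply: (mulfK0 e2_neq0).
by have := H k0 k i0; rewrite !Hl /=; lra.
Qed.

Lemma ker_all t : kerprop t.
Proof.
case: (ineq_cases t) => [[k ->]|[k ->]|[->|->]|[->|->]].
- exact: ker_inlL.
- exact: ker_inlR.
- exact: ker_inr0.
- exact: ker_inr1.
- exact: ker_inr2.
- exact: ker_inr3.
Qed.


Lemma N_neq0 t : N t != 0.
Proof.
apply/eqP => E; case: (ineq_cases t) => [[k Et]|[k Et]|[Et|Et]|[Et|Et]]; rewrite Et in E.
- by move/rowP: E => /(_ (L k)); rewrite Nl eqxx mxE => /eqP; rewrite oppr_eq0 oner_eq0.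
- by move/rowP: E => /(_ (Rr k)); rewrite Nl eqxx mxE => /eqP; rewrite oppr_eq0 oner_eq0.
- by move/rowP: E => /(_ (L k0)); rewrite N0_l mxE => /eqP; rewrite oner_eq0.
- by move/rowP: E => /(_ (Rr l0)); rewrite N1_r mxE => /eqP; rewrite oner_eq0.
- by move/rowP: E => /(_ (L k0)); rewrite N2_l mxE => /eqP; rewrite oner_eq0.
- by move/rowP: E => /(_ (Rr l0)); rewrite N3_r mxE => /eqP; rewrite oner_eq0.
Qed.

Definition tight t (y : 'rV[R]_n) := P y /\ dotv (N t) y = r t.

Lemma affdim_ext (S S' : 'rV[R]_n -> Prop) k :
  (forall y, S y <-> S' y) -> affdim_ge S k -> affdim_ge S' k.
Proof. by move=> E [x [Sx fX]]; exists x; split => // i; apply/E. Qed.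

Lemma aff_tight_lb t : affdim_ge (tight t) n.-1.
Proof.
have [q0 [Tq0 K]] := ker_all t.
pose y q := if dotv (N t) (pt q) == r t then pt q else pt q0.
have := @aff_lb R n (tight t) Idx (pt q0) y 1 (N t).
rewrite rank_rV N_neq0 subn1; apply.
- by split => //; apply: P_pt.
- by move=> q; rewrite /y; case: eqP => E; split => //; apply: P_pt.
move=> v Hv; apply/sub_rVP; apply: K => q Tq.
by have := Hv q; rewrite /y Tq eqxx dotvBr => /eqP; rewrite subr_eq0 => /eqP.
Qed.

Lemma aff_tight_ub t : ~ affdim_ge (tight t) n.
Proof.
move=> H; have := aff_ub H (N_neq0 t) (r := r t); rewrite ltnn.
by move=> /(_ (fun y Ty => Ty.2)).
Qed.


Lemma dotv_Nl k (y : 'rV[R]_n) : dotv (N (inl k)) y = - y 0 k.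
Proof.
rewrite /dotv (bigD1 k) //= Nl eqxx big1 ?addr0; first by rewrite mulN1r.
by move=> j /negbTE jk; rewrite Nl jk oppr0 mul0r.
Qed.

Lemma top_i e (al c b : R) (i : 'I_e) : 0 < al ->
  (forall i' : 'I_e, (i'.+1)%:R * al + c <= b) -> (i.+1)%:R * al + c = b ->
  (i : nat).+1 = e.
Proof.
move=> a0 Hv He; case: (ltnP i.+1 e) => [lt|ge]; last by have := ltn_ord i; lia.
have := Hv (Ordinal lt); rewrite /= -He => H.
have : (i.+2)%:R * al <= (i.+1)%:R * al by lra.
by rewrite ler_pM2r // ler_nat ltnn.
Qed.

Lemma bot_j e (A be : R) (j : 'I_e) : 0 < A ->
  (forall j' : 'I_e, A + (j'.+1)%:R * be <= 0) -> A + (j.+1)%:R * be = 0 ->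
  (j : nat) = 0%N.
Proof.
move=> A0 Hv He; case: (posnP j) => // jp.
have lt : (j.-1 < e)%N by have := ltn_ord j; lia.
have := Hv (Ordinal lt); rewrite /= prednK // => H.
have b0 : 0 <= be by move: H He; rewrite -[(j : nat).+1]addn1 natrD; lra.
have : 0 <= (j.+1)%:R * be by rewrite mulr_ge0 ?ler0n.
move=> H2; exfalso; lra.
Qed.


Lemma pt0 k : pt None 0 k = 0. Proof. by rewrite /= mxE. Qed.

Lemma find (a : 'rV[R]_n) b : a != 0 -> (forall q, dotv a (pt q) <= b) ->
  exists t, forall q, dotv a (pt q) = b -> tq t q.
Proof.
move=> a0 va.
case: (boolP [exists k, [forall q, (dotv a (pt q) == b) ==> (pt q 0 k == 0)]]).
  move=> /existsP [k /forallP Hk]; exists (inl k) => q E.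
  rewrite /tq dotv_Nl /=; have := Hk q; rewrite E eqxx /= => /eqP ->.
  by rewrite oppr0.
rewrite negb_exists => /forallP HB.
have HB' : forall k, exists q, dotv a (pt q) = b /\ pt q 0 k != 0.
  move=> k; have := HB k; rewrite negb_forall => /existsP [q].
  by rewrite negb_imply => /andP [/eqP E nz]; exists q.
have tL : forall ka, exists (i : 'I_e1) la (j : 'I_e2),
    dotv a (pt (Some (ka, i, la, j))) = b.
  move=> ka; have [[[[[kb i] la] j]|] [E nz]] := HB' (L ka); last by rewrite pt0 eqxx in nz.
  move: nz; rewrite pt_Some Acol_l /=; case: ifP => [/eqP -> _|]; last by rewrite eqxx.
  by exists i, la, j.
have tR : forall la, exists ka (i : 'I_e1) (j : 'I_e2),
    dotv a (pt (Some (ka, i, la, j))) = b.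
  move=> la; have [[[[[ka i] lb] j]|] [E nz]] := HB' (Rr la); last by rewrite pt0 eqxx in nz.
  move: nz; rewrite pt_Some Acol_r /=; case: ifP => [/eqP -> _|]; last by rewrite eqxx.
  by exists ka, i, j.
have leL : forall ka kb, a 0 (L kb) <= a 0 (L ka).
  move=> ka kb; have [i [la [j E]]] := tL ka.
  have := va (Some (kb, i, la, j)); rewrite -E !pt_Some !dotv_Acol lerD2r.
  by rewrite ler_pM2l // ltr0Sn.
have leR : forall la lb, a 0 (Rr lb) <= a 0 (Rr la).
  move=> la lb; have [ka [i [j E]]] := tR la.
  have := va (Some (ka, i, lb, j)); rewrite -E !pt_Some !dotv_Acol lerD2l.
  by rewrite ler_pM2l // ltr0Sn.
set al := a 0 (L k0); set be := a 0 (Rr l0).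
have cL : forall ka, a 0 (L ka) = al.
  by move=> ka; apply/eqP; rewrite eq_le leL leL.
have cR : forall la, a 0 (Rr la) = be.
  by move=> la; apply/eqP; rewrite eq_le leR leR.
have vA : forall (ka : 'I_d1) (i : 'I_e1) (la : 'I_d2) (j : 'I_e2),
    dotv a (pt (Some (ka, i, la, j))) = (i.+1)%:R * al + (j.+1)%:R * be.
  by move=> ka i la j; rewrite pt_Some dotv_Acol cL cR.
have ab0 : al != 0 \/ be != 0.
  case: (eqVneq al 0) => [al0|]; last by left.
  case: (eqVneq be 0) => [be0|]; last by right.
  have a00 : a = 0 by apply: rv_split => k; rewrite mxE ?cL ?cR.
  by rewrite a00 eqxx in a0.
have b0 : 0 <= b by have := va None; rewrite dotv_pt_None.
have va' : forall (ka : 'I_d1) (i : 'I_e1) (la : 'I_d2) (j : 'I_e2), (i.+1)%:R * al + (j.+1)%:R * be <= b.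
  by move=> ka i la j; rewrite -(vA ka i la j); apply: va.
case: (ltrP 0 al) => [alp|aln].
  have hi : forall (ka : 'I_d1) (i : 'I_e1) (la : 'I_d2) (j : 'I_e2),
      (i.+1)%:R * al + (j.+1)%:R * be = b -> (i : nat).+1 = e1.
    by move=> ka i la j E; apply: (top_i alp _ E) => i'; apply: (va' ka i' la j).
  case: (eqVneq b 0) => [b00|bn0].
    exists (inr o0) => -[[[[ka i] la] j]|] E; last by rewrite /tq dotv_pt_None.
    rewrite vA in E; have hi' := hi ka i la j E.
    have hj : (j : nat) = 0%N.
      apply: (@bot_j e2 ((i.+1)%:R * al) be j); first by rewrite mulr_gt0 ?ltr0Sn.
        by move=> j'; rewrite -b00; apply: (va' ka i la j').
      by rewrite -b00.
    by rewrite /tq pt_Some dotv_Acol N0_l N0_r hi' hj /=; lra.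
  exists (inr o2) => -[[[[ka i] la] j]|] E; last first.
    by move: E; rewrite dotv_pt_None => E; rewrite E eqxx in bn0.
  rewrite vA in E; have hi' := hi ka i la j E.
  by rewrite /tq pt_Some dotv_Acol N2_l N2_r hi' /=; lra.
case: (ltrP 0 be) => [bep|ben].
  have hj : forall (ka : 'I_d1) (i : 'I_e1) (la : 'I_d2) (j : 'I_e2),
      (i.+1)%:R * al + (j.+1)%:R * be = b -> (j : nat).+1 = e2.
    move=> ka i la j E; rewrite addrC in E; apply: (top_i bep _ E) => j'.
    by rewrite addrC; apply: (va' ka i la j').
  case: (eqVneq b 0) => [b00|bn0].
    exists (inr o1) => -[[[[ka i] la] j]|] E; last by rewrite /tq dotv_pt_None.
    rewrite vA in E; have hj' := hj ka i la j E.
    have hi : (i : nat) = 0%N.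
      rewrite addrC in E.
      apply: (@bot_j e1 ((j.+1)%:R * be) al i); first by rewrite mulr_gt0 ?ltr0Sn.
        by move=> i'; rewrite -b00 addrC; apply: (va' ka i' la j).
      by rewrite -b00.
    by rewrite /tq pt_Some dotv_Acol N1_l N1_r hi hj' /=; lra.
  exists (inr o3) => -[[[[ka i] la] j]|] E; last first.
    by move: E; rewrite dotv_pt_None => E; rewrite E eqxx in bn0.
  rewrite vA in E; have hj' := hj ka i la j E.
  by rewrite /tq pt_Some dotv_Acol N3_l N3_r hj' /=; lra.
exfalso; have [i [la [j E]]] := tL k0; rewrite vA in E.
have h1 : (i.+1)%:R * al <= 0 by rewrite mulr_ge0_le0 ?ler0n.
have h2 : (j.+1)%:R * be <= 0 by rewrite mulr_ge0_le0 ?ler0n.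
case: ab0 => [an|bn].
  have : (i.+1)%:R * al < 0 by rewrite pmulr_rlt0 ?ltr0Sn // lt_neqAle an aln.
  lra.
have : (j.+1)%:R * be < 0 by rewrite pmulr_rlt0 ?ltr0Sn // lt_neqAle bn ben.
lra.
Qed.


Definition dec (v : 'rV[R]_n) : 'I_n + 'I_4 :=
  if (v 0 (L k0) != 0) && (e1%:R * v 0 (L k0) + v 0 (Rr l0) == 0) then inr o0
  else if (v 0 (Rr l0) != 0) && (v 0 (L k0) + e2%:R * v 0 (Rr l0) == 0) then inr o1
  else if [&& v 0 (L k0) != 0, v 0 (L k0) == v 0 (L k1) & v 0 (Rr l0) == 0] then inr o2
  else if [&& v 0 (Rr l0) != 0, v 0 (Rr l0) == v 0 (Rr l1) & v 0 (L k0) == 0] then inr o3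
  else inl (odflt (L k0) [pick k | v 0 k != 0]).

Lemma inl_ent (c : R) k k' : c != 0 -> ((c *: N (inl k)) 0 k' != 0) = (k' == k).
Proof.
move=> c0; rewrite mxE Nl; case: (k' == k) => /=.
  by rewrite mulrN1 oppr_eq0.
by rewrite oppr0 mulr0 eqxx.
Qed.

Lemma inl_ent0 (c : R) k k' : k' != k -> (c *: N (inl k)) 0 k' = 0.
Proof. by move=> /negbTE kk; rewrite mxE Nl kk oppr0 mulr0. Qed.

Lemma inl_ent1 (c : R) k : (c *: N (inl k)) 0 k = - c.
Proof. by rewrite mxE Nl eqxx mulrN1. Qed.

Lemma e12 : e1%:R * e2%:R != 1 :> R.
Proof. by rewrite -natrM -[1]/(1%:R) eqr_nat; apply/eqP; nia. Qed.

Lemma rl_ne (i : 'I_d2) (j : 'I_d1) : Rr i != L j. Proof. by rewrite eq_rlshift. Qed.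
Lemma lr_ne (i : 'I_d1) (j : 'I_d2) : L i != Rr j. Proof. by rewrite eq_lrshift. Qed.
Lemma l10 : L k1 != L k0. Proof. by rewrite eq_shift. Qed.
Lemma r10 : Rr l1 != Rr l0. Proof. by rewrite eq_shift. Qed.

Lemma dec_inl k (c : R) : c != 0 -> dec (c *: N (inl k)) = inl k.
Proof.
move=> c0; rewrite /dec.
have cf : forall x : R, x != 0 -> x * c = 0 -> False.
  by move=> x x0 /(mulfK0 x0) /eqP; rewrite (negbTE c0).
case: ifP => [/andP [nz /eqP E]|_].
  rewrite inl_ent // in nz; move/eqP: nz E => <-.
  rewrite inl_ent1 (inl_ent0 _ (rl_ne _ _)) => E; exfalso.
  by apply: (cf _ e1_neq0); lra.
case: ifP => [/andP [nz /eqP E]|_].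
  rewrite inl_ent // in nz; move/eqP: nz E => <-.
  rewrite inl_ent1 (inl_ent0 _ (lr_ne _ _)) => E; exfalso.
  by apply: (cf _ e2_neq0); lra.
case: ifP => [/and3P [nz /eqP E _]|_].
  rewrite inl_ent // in nz; move/eqP: nz E => <-.
  rewrite inl_ent1 (inl_ent0 _ l10) => E; exfalso.
  by apply: (cf 1); [rewrite oner_eq0|lra].
case: ifP => [/and3P [nz /eqP E _]|_].
  rewrite inl_ent // in nz; move/eqP: nz E => <-.
  rewrite inl_ent1 (inl_ent0 _ r10) => E; exfalso.
  by apply: (cf 1); [rewrite oner_eq0|lra].
case: pickP => [k' /= Hk|H]; first by rewrite inl_ent // in Hk; rewrite (eqP Hk).
by have := H k; rewrite /= inl_ent // eqxx.
Qed.

Lemma scal_ent (c : R) t k : (c *: N t) 0 k = c * N t 0 k.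
Proof. by rewrite mxE. Qed.

Lemma dec_ok t (c : R) : c != 0 -> dec (c *: N t) = t.
Proof.
move=> c0; rewrite /dec.
have cf : forall x : R, x != 0 -> x * c = 0 -> False.
  by move=> x x0 /(mulfK0 x0) /eqP; rewrite (negbTE c0).
case: (ineq_cases t) => [[k Et]|[k Et]|[Et|Et]|[Et|Et]]; rewrite Et;
  try exact: dec_inl.
- rewrite !scal_ent !N0_l !N0_r !mulr1 ifT //; rewrite c0 /=; apply/eqP; lra.
- rewrite !scal_ent !N1_l !N1_r !mulr1.
  case: ifP => [/andP[_ /eqP E]|_].
    exfalso; apply: (cf (1 - e1%:R * e2%:R)); last by lra.
    by rewrite subr_eq0 eq_sym e12.
  rewrite ifT //; rewrite c0 /=; apply/eqP; lra.
- rewrite !scal_ent !N2_l !N2_r !mulr1 !mulr0 !eqxx /=.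
  case: ifP => [/andP[_ /eqP E]|_].
    by exfalso; apply: (cf _ e1_neq0); lra.
  by rewrite c0.
- rewrite !scal_ent !N3_l !N3_r !mulr1 !mulr0 !eqxx /=.
  case: ifP => [/andP[_ /eqP E]|_].
    by exfalso; apply: (cf _ e2_neq0); lra.
  by rewrite c0.
Qed.


Lemma uniq_t t t' : (forall y, tight t y <-> tight t' y) -> t = t'.
Proof.
move=> E; have [q0 [Tq0 K]] := ker_all t.
have h : forall q, tq t q -> dotv (N t') (pt q) = r t'.
  by move=> q Tq; have [] := proj1 (E (pt q)) (conj (P_pt q) Tq).
have [c Ec] : exists c, N t' = c *: N t by apply: K => q Tq; rewrite !h.
have c0 : c != 0.
  by apply/eqP => c00; have := N_neq0 t'; rewrite Ec c00 scale0r eqxx.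
by rewrite -(dec_ok t' (oner_neq0 R)) scale1r Ec dec_ok.
Qed.

Lemma dotv0l m (y : 'rV[R]_m) : dotv 0 y = 0.
Proof. by rewrite /dotv big1 // => k _; rewrite mxE mul0r. Qed.

Lemma facet_iff (F : 'rV[R]_n -> Prop) :
  is_facet P F n <-> exists t, forall y, F y <-> tight t y.
Proof.
split.
  move=> [[a [b [va HF]]] [[x [Fx fX]] nF]].
  have va' : forall q, dotv a (pt q) <= b by move=> q; apply: va; apply: P_pt.
  have a0 : a != 0.
    apply/eqP => a00; apply: nF.
    have b0 : b = 0.
      by have [_] := proj1 (HF _) (Fx ord0); rewrite a00 dotv0l.
    have H1 : affdim_ge P n by case: aff_P.
    have -> : n.-1.+1 = n by lia.
    apply: (affdim_ext _ H1) => y; rewrite HF a00 dotv0l b0.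
    by split => // -[].
  have [t Ht] := find a0 va'.
  have kx : forall i, dotv a (x i) = b by move=> i; have [] := proj1 (HF _) (Fx i).
  have kN : forall i, dotv (N t) (x i) = r t.
    by move=> i; have [Pxi axi] := proj1 (HF _) (Fx i); apply: (supp va' Pxi axi).
  exists t => y; split.
    by move/HF => [Py ay]; split => //; apply: (supp va' Py ay).
  move=> [Py Ny]; apply/HF; split => //.
  have n0 : (0 < n)%N by lia.
  have [c Ec] := line_ker n0 fX a0 (dmx_ker kx) (dmx_ker kN).
  have c0 : c != 0.
    by apply/eqP => c00; have := N_neq0 t; rewrite Ec c00 scale0r eqxx.
  apply: (mulfI c0); rewrite -!dotvZl -Ec Ny -(kN ord0) Ec dotvZl kx.
  by [].
move=> [t Ht]; split.
  exists (N t), (r t); split; first by move=> y Py; apply: valid.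
  by move=> y; apply: Ht.
split.
  by apply: (affdim_ext _ (aff_tight_lb t)) => y; split => /Ht.
have -> : n.-1.+1 = n by lia.
by move=> H; apply: (@aff_tight_ub t); apply: (affdim_ext _ H) => y; apply: Ht.
Qed.

End Poly.

Unset Implicit Arguments.
Set Strict Implicit.

Theorem proposition4p2 (R : realFieldType) (d1 d2 e1 e2 : nat)
  (hd1 : (2 <= d1)%N) (hd2 : (2 <= d2)%N) (he1 : (2 <= e1)%N) (he2 : (2 <= e2)%N) :
  let P := @convA0 R d1 e1 d2 e2 in
  let tight := fun (t : 'I_(d1 + d2) + 'I_4) (y : 'rV[R]_(d1 + d2)) =>
      P y /\ dotv (@ineq_normal R d1 e1 d2 e2 t) y = @ineq_rhs R d1 d2 e1 e2 t in
  [/\ has_affdim P (d1 + d2),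
      (forall t y, P y -> dotv (@ineq_normal R d1 e1 d2 e2 t) y <= @ineq_rhs R d1 d2 e1 e2 t),
      (forall F : 'rV[R]_(d1 + d2) -> Prop,
         is_facet P F (d1 + d2) <-> exists t, forall y, F y <-> tight t y) &
      (forall t t', (forall y, tight t y <-> tight t' y) -> t = t')].
Proof.
move=> P tight; split.
- exact: (aff_P R hd1 hd2 he1 he2).
- by move=> t y; apply: valid.
- by move=> F; apply: (facet_iff hd1 hd2 he1 he2).
- by move=> t t'; apply: (uniq_t hd1 hd2 he1 he2).
Qed.
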